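(* Let $(\mathcal{F},w,s)$ be a balanced system on $n$ elements, with $\mathcal{F}=(F_1,\dots,F_m)$, and let $G=(V,E)$ be a directed graph. Let $f$ be the partitioning produced by the BISP algorithm with this system: (i) for every vertex $v$ choose $l(v)\in[m]$ independently with $\mathbb{P}(l(v)=i)=w_i$; (ii) for every edge $(v,u)\in E$ choose $f(v,u)\in[n]$ independently with $\mathbb{P}(f(v,u)=p)=s_{l(v)l(u)p}$. Suppose $|V|\to\infty$, $|E|/|V|\to\infty$ and $n=o\big((|E|/|V|)^{1/2}\big)$. Then for every $\varepsilon>0$, $\mathbb{P}(\mathrm{ib}(f)\le 1+\varepsilon)\to1$.
   Context: A system on $n$ elements is a triple $(\mathcal{F},w,s)$ where $\mathcal{F}=(F_1,\dots,F_m)$ is a collection of subsets of $[n]$, $w\in[0,1]^m$ with $\sum_i w_i=1$, and $s\in[0,1]^{m\times m\times n}$ with $\sum_p s_{ijp}=1$ for all $i,j$. It is balanced if for all $p\in[n]$, $\sum_{i=1}^m\sum_{j=1}^m w_iw_js_{ijp}=1/n$. A graph partitioning of $G=(V,E)$ into the $n$ partitions $[n]$ is a function $f:E\to[n]$; its imbalance is $\mathrm{ib}(f)=\dfrac{\max_{l\in[n]}|\{e\in E: f(e)=l\}|}{|E|/n}$. *)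

(* Defs.v *)
From HB Require Import structures.
From mathcomp Require Import all_boot all_order all_algebra.
From mathcomp Require Import all_classical all_reals all_analysis.
Set Implicit Arguments. Unset Strict Implicit. Unset Printing Implicit Defensive.
Import Order.TTheory GRing.Theory Num.Theory.
Local Open Scope ring_scope.

Definition edge_t (V : finType) (E : {set V * V}) : finType :=
  {e : V * V | e \in E}.

Definition is_system (R : realFieldType) (n m : nat)
  (F : 'I_m -> {set 'I_n}) (w : 'I_m -> R) (s : 'I_m -> 'I_m -> 'I_n -> R) : Prop :=
  (forall i, 0 <= w i <= 1) /\ (\sum_(i < m) w i = 1) /\
  (forall i j p, 0 <= s i j p <= 1) /\ (forall i j, \sum_(p < n) s i j p = 1).

Definition balanced (R : realFieldType) (n m : nat)
  (w : 'I_m -> R) (s : 'I_m -> 'I_m -> 'I_n -> R) : Prop :=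
  forall p : 'I_n, \sum_(i < m) \sum_(j < m) w i * w j * s i j p = (n%:R)^-1.

Definition ib (R : realFieldType) (V : finType) (E : {set V * V}) (n : nat)
  (f : {ffun edge_t E -> 'I_n}) : R :=
  (\max_(l < n) #|[set e | f e == l]|)%N%:R / (#|E|%:R / n%:R).

(* Probability that the BISP partitioning f satisfies A:
   l : V -> [m] drawn with P(l v = i) = w i independently,
   then f(v,u) drawn independently with P(f(v,u) = p) = s (l v) (l u) p. *)
Definition bisp_prob (R : realFieldType) (V : finType) (E : {set V * V})
  (n m : nat) (w : 'I_m -> R) (s : 'I_m -> 'I_m -> 'I_n -> R)
  (A : pred {ffun edge_t E -> 'I_n}) : R :=
  \sum_(l : {ffun V -> 'I_m})
     (\prod_(v : V) w (l v)) *
     \sum_(f : {ffun edge_t E -> 'I_n} | A f)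
        \prod_(e : edge_t E) s (l (val e).1) (l (val e).2) (f e).

(* Main.v *)
Require Import Defs.
From HB Require Import structures.
From mathcomp Require Import all_boot all_order all_algebra.
From mathcomp Require Import all_classical all_reals all_analysis.
From mathcomp Require Import ring lra.
Import Order.TTheory GRing.Theory Num.Theory.
Import numFieldNormedType.Exports.
Local Open Scope ring_scope.
Set Implicit Arguments. Unset Strict Implicit. Unset Printing Implicit Defensive.

Lemma marg (R : comRingType) (I J : finType) (q : I -> J -> R)
  (hq : forall i, \sum_j q i j = 1) (S : {set I}) (g : I -> J) :
  \sum_(f : {ffun I -> J}) (\prod_i q i (f i)) * \prod_(i in S) ((f i == g i)%:R : R)
  = \prod_(i in S) q i (g i).
Proof.
rewrite (eq_bigr (fun f : {ffun I -> J} => \prod_i (q i (f i) * (if i \in S then (f i == g i)%:R else 1)))); last first.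
  by move=> f _; rewrite big_split /= -big_mkcond.
rewrite -(bigA_distr_bigA (fun i j => q i j * (if i \in S then (j == g i)%:R else 1))).
rewrite [RHS]big_mkcond; apply: eq_bigr => i _.
case: ifP => _; last by under eq_bigr do rewrite mulr1; exact: hq.
rewrite (bigD1 (g i)) //= eqxx mulr1 big1 ?addr0 // => j /negbTE ->; exact: mulr0.
Qed.

Lemma sum_ind (R : comRingType) (J : finType) (F : J -> R) x :
  F x = \sum_j F j * (x == j)%:R.
Proof.
rewrite (bigD1 x) //= eqxx mulr1 big1 ?addr0 // => j /negbTE; rewrite eq_sym => ->; exact: mulr0.
Qed.

Lemma ord_pos (R : comRingType) k (G : 'I_k -> R) : (1 : R) != 0 -> \sum_(p < k) G p = 1 -> (0 < k)%N.
Proof. by case: k G => // G h; rewrite big_ord0 => /eqP; rewrite eq_sym (negbTE h). Qed.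

Section Fixed.
Variables (R : realFieldType) (V : finType) (E : {set V * V}) (n m : nat).
Variables (F : 'I_m -> {set 'I_n}) (w : 'I_m -> R) (s : 'I_m -> 'I_m -> 'I_n -> R).
Hypothesis hsys : is_system F w s.
Hypothesis hbal : balanced w s.

Local Notation T := (edge_t E).
Definition src (e : T) : V := (val e).1.
Definition dst (e : T) : V := (val e).2.
Definition PL (l : {ffun V -> 'I_m}) : R := \prod_v w (l v).
Definition Q (l : {ffun V -> 'I_m}) (f : {ffun T -> 'I_n}) : R :=
  \prod_e s (l (src e)) (l (dst e)) (f e).
Definition Ex (H : {ffun V -> 'I_m} -> {ffun T -> 'I_n} -> R) : R :=
  \sum_l PL l * \sum_f Q l f * H l f.

Lemma w_ge0 i : 0 <= w i. Proof. by case: hsys => h _; case/andP: (h i). Qed.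
Lemma s_ge0 i j p : 0 <= s i j p. Proof. by case: hsys => _ [_ [h _]]; case/andP: (h i j p). Qed.
Lemma s_le1 i j p : s i j p <= 1. Proof. by case: hsys => _ [_ [h _]]; case/andP: (h i j p). Qed.
Lemma sum_w : \sum_i w i = 1. Proof. by case: hsys => _ []. Qed.
Lemma sum_s i j : \sum_p s i j p = 1. Proof. by case: hsys => _ [_ [_ h]]. Qed.

Lemma PL_ge0 l : 0 <= PL l. Proof. by apply: prodr_ge0 => v _; exact: w_ge0. Qed.
Lemma Q_ge0 l f : 0 <= Q l f. Proof. by apply: prodr_ge0 => v _; exact: s_ge0. Qed.

Lemma PLind (S : {set V}) (g : V -> 'I_m) :
  \sum_l PL l * \prod_(v in S) ((l v == g v)%:R : R) = \prod_(v in S) w (g v).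
Proof. exact: (@marg R V 'I_m (fun _ => w) (fun _ => sum_w)). Qed.

Lemma Qind l (S : {set T}) (g : T -> 'I_n) :
  \sum_f Q l f * \prod_(e in S) ((f e == g e)%:R : R) = \prod_(e in S) s (l (src e)) (l (dst e)) (g e).
Proof. exact: (@marg R T 'I_n (fun e => s (l (src e)) (l (dst e))) (fun e => sum_s _ _)). Qed.

Lemma sumQ l : \sum_f Q l f = 1.
Proof.
rewrite /Q -(bigA_distr_bigA (fun e p => s (l (src e)) (l (dst e)) p)).
by apply: big1 => e _; exact: sum_s.
Qed.

Lemma sumPL : \sum_l PL l = 1.
Proof.
rewrite /PL -(bigA_distr_bigA (fun v i => w i)).
by apply: big1 => v _; exact: sum_w.
Qed.

Lemma Ex1 : Ex (fun _ _ => 1) = 1.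
Proof. rewrite /Ex -[RHS]sumPL; apply: eq_bigr => l _; under eq_bigr do rewrite mulr1. by rewrite sumQ mulr1. Qed.

Lemma ExD H1 H2 : Ex (fun l f => H1 l f + H2 l f) = Ex H1 + Ex H2.
Proof.
rewrite /Ex -big_split /=; apply: eq_bigr => l _.
by rewrite -mulrDr -big_split /=; congr (_ * _); apply: eq_bigr => f _; rewrite mulrDr.
Qed.

Lemma ExZ c H : Ex (fun l f => c * H l f) = c * Ex H.
Proof.
rewrite /Ex mulr_sumr; apply: eq_bigr => l _.
rewrite [RHS]mulrCA; congr (_ * _); rewrite mulr_sumr; apply: eq_bigr => f _.
by rewrite mulrCA.
Qed.

Lemma Ex_sum (I : finType) (P : pred I) G :
  Ex (fun l f => \sum_(i | P i) G i l f) = \sum_(i | P i) Ex (G i).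
Proof.
rewrite /Ex exchange_big /=; apply: eq_bigr => l _.
rewrite -mulr_sumr; congr (_ * _); rewrite exchange_big /=; apply: eq_bigr => f _.
by rewrite mulr_sumr.
Qed.

Lemma Ex_le H1 H2 : (forall l f, H1 l f <= H2 l f) -> Ex H1 <= Ex H2.
Proof.
move=> h; apply: ler_sum => l _; apply: ler_wpM2l; first exact: PL_ge0.
by apply: ler_sum => f _; apply: ler_wpM2l; [exact: Q_ge0 | exact: h].
Qed.

Lemma bisp_Ex A : bisp_prob w s A = Ex (fun _ f => (A f)%:R).
Proof.
rewrite /bisp_prob /Ex; apply: eq_bigr => l _; congr (_ * _).
rewrite big_mkcond /=; apply: eq_bigr => f _.
by case: (A f); rewrite ?mulr1 ?mulr0.
Qed.

Lemma prod2 (G : V -> 'I_m -> R) a b i j : a != b ->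
  \prod_(v in a |: [set b]) G v (if v == a then i else j) = G a i * G b j.
Proof.
move=> hab; rewrite big_setU1 ?big_set1 ?inE // eqxx.
by rewrite eq_sym (negbTE hab).
Qed.

Lemma prod4 (G : V -> 'I_m -> R) a b c d i1 i2 i3 i4 :
  a != b -> a != c -> a != d -> b != c -> b != d -> c != d ->
  \prod_(v in a |: (b |: (c |: [set d])))
     G v (if v == a then i1 else if v == b then i2 else if v == c then i3 else i4)
  = G a i1 * G b i2 * G c i3 * G d i4.
Proof.
move=> hab hac had hbc hbd hcd.
rewrite big_setU1; last by rewrite !inE negb_or negb_or hab hac.
rewrite big_setU1; last by rewrite !inE negb_or hbc.
rewrite big_setU1; last by rewrite !inE.
rewrite big_set1 eqxx.
rewrite (eq_sym b a) (negbTE hab) eqxx.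
rewrite (eq_sym c a) (negbTE hac) (eq_sym c b) (negbTE hbc) eqxx.
rewrite (eq_sym d a) (negbTE had) (eq_sym d b) (negbTE hbd) (eq_sym d c) (negbTE hcd).
by rewrite /= !mulrA.
Qed.

Lemma PL2 (H : 'I_m -> 'I_m -> R) a b : a != b ->
  \sum_l PL l * H (l a) (l b) = \sum_i \sum_j w i * w j * H i j.
Proof.
move=> hab.
transitivity (\sum_l PL l * \sum_i \sum_j H i j * ((l a == i)%:R * (l b == j)%:R)).
  apply: eq_bigr => l _; congr (_ * _).
  rewrite (sum_ind (fun i => H i (l b)) (l a)); apply: eq_bigr => i _.
  rewrite (sum_ind (H i) (l b)) mulr_suml; apply: eq_bigr => j _.
  by rewrite -mulrA (mulrC (_ %:R)).
under eq_bigr do rewrite mulr_sumr.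
under eq_bigr do under eq_bigr do rewrite mulr_sumr.
rewrite exchange_big; apply: eq_bigr => i _; rewrite exchange_big; apply: eq_bigr => j _.
under eq_bigr do rewrite mulrCA.
rewrite -mulr_sumr.
under eq_bigr => l _ do rewrite -(prod2 (fun v x => (l v == x)%:R) i j hab).
by rewrite PLind (prod2 (fun _ x => w x)) // mulrC.
Qed.

Lemma exp2 (l : {ffun V -> 'I_m}) a b (H : 'I_m -> 'I_m -> R) :
  H (l a) (l b) = \sum_(x : 'I_m * 'I_m) H x.1 x.2 * ((l a == x.1)%:R * (l b == x.2)%:R).
Proof.
rewrite -(pair_big xpredT xpredT (fun i j => H i j * ((l a == i)%:R * (l b == j)%:R))) /=.
rewrite (sum_ind (fun i => H i (l b)) (l a)); apply: eq_bigr => i _.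
rewrite (sum_ind (H i) (l b)) mulr_suml; apply: eq_bigr => j _.
by rewrite -mulrA (mulrC (_ %:R)).
Qed.

Lemma PL4 (H K : 'I_m -> 'I_m -> R) a b c d :
  a != b -> a != c -> a != d -> b != c -> b != d -> c != d ->
  \sum_l PL l * (H (l a) (l b) * K (l c) (l d)) =
  (\sum_i \sum_j w i * w j * H i j) * (\sum_i \sum_j w i * w j * K i j).
Proof.
move=> hab hac had hbc hbd hcd.
transitivity (\sum_l PL l * \sum_(x : 'I_m * 'I_m) \sum_(y : 'I_m * 'I_m)
   (H x.1 x.2 * K y.1 y.2) * (((l a == x.1)%:R * (l b == x.2)%:R) * ((l c == y.1)%:R * (l d == y.2)%:R))).
  apply: eq_bigr => l _; congr (_ * _).
  rewrite (exp2 l a b H) (exp2 l c d K) mulr_suml; apply: eq_bigr => x _.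
  rewrite mulr_sumr; apply: eq_bigr => y _.
  by rewrite mulrACA.
under eq_bigr do rewrite mulr_sumr.
rewrite exchange_big.
under eq_bigr => x _ do (under eq_bigr do rewrite mulr_sumr; rewrite exchange_big).
rewrite [in RHS]pair_bigA [in RHS]pair_bigA.
rewrite [RHS]mulr_suml; apply: eq_bigr => [[i j]] _ /=.
rewrite [RHS]mulr_sumr; apply: eq_bigr => [[i' j']] _ /=.
under eq_bigr do rewrite mulrCA.
rewrite -mulr_sumr.
under eq_bigr => l _ do rewrite mulrA -(prod4 (fun v x => (l v == x)%:R) i j i' j' hab hac had hbc hbd hcd).
rewrite PLind (prod4 (fun _ x => w x)) //.
by ring.
Qed.

Lemma Qind1 l e p : \sum_f Q l f * ((f e == p)%:R : R) = s (l (src e)) (l (dst e)) p.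
Proof.
have := Qind l [set e] (fun _ => p); rewrite big_set1 => <-.
by apply: eq_bigr => f _; rewrite big_set1.
Qed.

Lemma Qind2 l e e' p : e != e' ->
  \sum_f Q l f * (((f e == p)%:R : R) * (f e' == p)%:R)
  = s (l (src e)) (l (dst e)) p * s (l (src e')) (l (dst e')) p.
Proof.
move=> hee; have := Qind l (e |: [set e']) (fun _ => p).
rewrite big_setU1 ?inE //= big_set1 => <-.
by apply: eq_bigr => f _; rewrite big_setU1 ?inE //= big_set1.
Qed.

Definition NL (e : T) := src e != dst e.
Definition share (e e' : T) :=
  [|| src e == src e', src e == dst e', dst e == src e' | dst e == dst e'].

Lemma Ex_ind1 e p : NL e -> Ex (fun _ f => (f e == p)%:R) = n%:R^-1.
Proof.
move=> he; rewrite /Ex; under eq_bigr => l _ do rewrite Qind1.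
by rewrite (PL2 (fun i j => s i j p)) //; exact: hbal.
Qed.

Lemma Ex_ind2 e e' p : NL e -> NL e' -> ~~ share e e' ->
  Ex (fun _ f => (f e == p)%:R * (f e' == p)%:R) = n%:R^-1 * n%:R^-1.
Proof.
rewrite /NL /share => he he'; rewrite !negb_or => /and4P [h1 h2 h3 h4].
have hee : e != e'. by apply: contraNneq h1 => ->.
rewrite /Ex; under eq_bigr => l _ do rewrite Qind2 //.
by rewrite (PL4 (fun i j => s i j p) (fun i j => s i j p)) // ?hbal // eq_sym.
Qed.

Lemma ind_ge0 (b : bool) : (0 : R) <= b%:R. Proof. by case: b. Qed.
Lemma ind_le1 (b : bool) : (b%:R : R) <= 1. Proof. by case: b. Qed.

Lemma n_inv_ge0 : (0 : R) <= n%:R^-1. Proof. by rewrite invr_ge0 ler0n. Qed.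

Lemma Ex_pair e e' p : NL e -> NL e' ->
  Ex (fun _ f => (f e == p)%:R * (f e' == p)%:R)
  <= n%:R^-1 * n%:R^-1 + (share e e')%:R * n%:R^-1.
Proof.
move=> he he'; case hs: (share e e').
  rewrite mul1r -[X in X <= _]add0r; apply: lerD; first by rewrite mulr_ge0 // n_inv_ge0.
  rewrite -(Ex_ind1 p he); apply: Ex_le => l f.
  by rewrite -[X in _ <= X]mulr1; apply: ler_wpM2l; [exact: ind_ge0 | exact: ind_le1].
by rewrite mul0r addr0 Ex_ind2 // hs.
Qed.

Lemma Ex_ext H1 H2 : (forall l f, H1 l f = H2 l f) -> Ex H1 = Ex H2.
Proof. by move=> h; apply/le_anti/andP; split; apply: Ex_le => l f; rewrite h. Qed.

Lemma sum_inj (I J : finType) (h : I -> J) (G : J -> R) :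
  injective h -> (forall j, 0 <= G j) -> \sum_i G (h i) <= \sum_j G j.
Proof.
move=> hinj hG.
have -> : \sum_i G (h i) = \sum_(j in [set h i | i : I]) G j.
  by rewrite big_imset /=; [apply: eq_bigl => i; rewrite ?inE | move=> x y _ _; exact: hinj].
rewrite [X in _ <= X](bigID (fun j => j \in [set h i | i : I])) /=.
by rewrite lerDl sumr_ge0.
Qed.

Lemma sum_eq1 (x : V) : \sum_(a : V) ((x == a)%:R : R) = 1.
Proof.
rewrite (bigD1 x) //= eqxx big1 ?addr0 // => a /negbTE.
by rewrite eq_sym => ->.
Qed.

Lemma cardVR : \sum_(b : V) (1 : R) = #|V|%:R.
Proof. by rewrite sumr_const. Qed.

Lemma cnt1 x : \sum_e ((x == src e)%:R : R) <= #|V|%:R.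
Proof.
have := @sum_inj T (V * V)%type val (fun z : V * V => ((x == z.1)%:R : R)) val_inj (fun _ => ind_ge0 _).
move/le_trans; apply.
rewrite -(pair_bigA _ (fun a b : V => ((x == a)%:R : R))) /= exchange_big /=.
by under eq_bigr do rewrite sum_eq1; rewrite cardVR.
Qed.

Lemma cnt2 x : \sum_e ((x == dst e)%:R : R) <= #|V|%:R.
Proof.
have := @sum_inj T (V * V)%type val (fun z : V * V => ((x == z.2)%:R : R)) val_inj (fun _ => ind_ge0 _).
move/le_trans; apply.
rewrite -(pair_bigA _ (fun a b : V => ((x == b)%:R : R))) /=.
by under eq_bigr do rewrite sum_eq1; rewrite cardVR.
Qed.

Lemma cnt_loops : \sum_(e | ~~ NL e) (1 : R) <= #|V|%:R.
Proof.
rewrite big_mkcond /=.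
have -> : \sum_e (if ~~ NL e then 1 else 0) = \sum_e ((src e == dst e)%:R : R).
  by apply: eq_bigr => e _; rewrite /NL negbK; case: eqP.
have := @sum_inj T (V * V)%type val (fun z : V * V => ((z.1 == z.2)%:R : R)) val_inj (fun _ => ind_ge0 _).
move/le_trans; apply.
rewrite -(pair_bigA _ (fun a b : V => ((a == b)%:R : R))) /=.
by under eq_bigr do rewrite sum_eq1; rewrite cardVR.
Qed.

Lemma card_T : #|T| = #|E|.
Proof. by rewrite card_sig; apply: eq_card => x. Qed.

Lemma cnt_share e : \sum_e' ((share e e')%:R : R) <= 4 * #|V|%:R.
Proof.
apply: le_trans (_ : \sum_e' (((src e == src e')%:R + (src e == dst e')%:R)
   + ((dst e == src e')%:R + (dst e == dst e')%:R)) <= _).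
  apply: ler_sum => e' _; rewrite /share.
  by case: (src e == src e'); case: (src e == dst e'); case: (dst e == src e'); case: (dst e == dst e');
    rewrite /= ?addr0 ?add0r ?ler01 ?lexx // ?lerDl ?ler01 ?addr_ge0 ?ler01 //; lra.
rewrite big_split /= !big_split /=.
have := cnt1 (src e); have := cnt2 (src e); have := cnt1 (dst e); have := cnt2 (dst e).
lra.
Qed.

Definition Y (p : 'I_n) (f : {ffun T -> 'I_n}) : R := \sum_(e | NL e) (f e == p)%:R.
Definition N' : R := \sum_(e | NL e) 1.
Definition mu : R := N' * n%:R^-1.

Lemma Ex_Y p : Ex (fun _ f => Y p f) = mu.
Proof.
rewrite /Y Ex_sum /mu /N' mulr_suml; apply: eq_bigr => e he.
by rewrite Ex_ind1 // mul1r.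
Qed.

Lemma Ex_Y2 p : Ex (fun _ f => Y p f ^+ 2) <= mu ^+ 2 + 4 * #|V|%:R * #|E|%:R * n%:R^-1.
Proof.
rewrite (@Ex_ext _ (fun l f => \sum_(e | NL e) \sum_(e' | NL e') (f e == p)%:R * (f e' == p)%:R)); last first.
  move=> l f; rewrite expr2 /Y mulr_suml; apply: eq_bigr => e _; by rewrite mulr_sumr.
rewrite Ex_sum.
apply: le_trans (_ : \sum_(e | NL e) \sum_(e' | NL e') (n%:R^-1 * n%:R^-1 + (share e e')%:R * n%:R^-1) <= _).
  apply: ler_sum => e he; rewrite Ex_sum; apply: ler_sum => e' he'; exact: Ex_pair.
have -> : \sum_(e | NL e) \sum_(e' | NL e') (n%:R^-1 * n%:R^-1 + (share e e')%:R * n%:R^-1)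
   = mu ^+ 2 + \sum_(e | NL e) \sum_(e' | NL e') ((share e e')%:R * n%:R^-1 : R).
  under eq_bigr do rewrite big_split /=.
  rewrite big_split /=; congr (_ + _).
  have hc : forall c : R, \sum_(e | NL e) c = N' * c.
    by move=> c; rewrite /N' mulr_suml; apply: eq_bigr => e _; rewrite mul1r.
  under eq_bigr do rewrite hc.
  by rewrite hc /mu; ring.
apply: lerD => //.
apply: le_trans (_ : \sum_e \sum_e' ((share e e')%:R * n%:R^-1 : R) <= _).
  apply: le_trans (_ : \sum_(e | NL e) \sum_e' ((share e e')%:R * n%:R^-1 : R) <= _).
    apply: ler_sum => e _; rewrite [X in _ <= X](bigID NL) /= lerDl.
    by apply: sumr_ge0 => e' _; rewrite mulr_ge0 ?n_inv_ge0 ?ind_ge0.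
  rewrite [X in _ <= X](bigID NL) /= lerDl.
  by apply: sumr_ge0 => e _; apply: sumr_ge0 => e' _; rewrite mulr_ge0 ?n_inv_ge0 ?ind_ge0.
apply: le_trans (_ : \sum_(e : T) (4 * #|V|%:R * n%:R^-1 : R) <= _).
  apply: ler_sum => e _; rewrite -mulr_suml; apply: ler_wpM2r; first exact: n_inv_ge0.
  exact: cnt_share.
by rewrite sumr_const card_T -mulr_natr; rewrite le_eqVlt; apply/orP; left; apply/eqP; ring.
Qed.

Lemma Var p : Ex (fun _ f => (Y p f - mu) ^+ 2) <= 4 * #|V|%:R * #|E|%:R * n%:R^-1.
Proof.
rewrite (@Ex_ext _ (fun l f => Y p f ^+ 2 + ((-2 * mu) * Y p f + mu ^+ 2 * 1))); last first.
  by move=> l f; ring.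
rewrite ExD ExD ExZ ExZ Ex1 Ex_Y.
have := Ex_Y2 p; lra.
Qed.

Lemma card_sum (f : {ffun T -> 'I_n}) p : (#|[set e | f e == p]|%:R : R) = \sum_e (f e == p)%:R.
Proof.
rewrite -sum1_card natr_sum big_mkcond /=; apply: eq_bigr => e _.
by rewrite inE; case: (f e == p).
Qed.

Lemma N'_le : N' <= #|E|%:R.
Proof.
rewrite /N' -card_T -sum1_card natr_sum.
rewrite [X in _ <= X](bigID NL) /= lerDl; exact: sumr_ge0.
Qed.

Definition Aeps (eps : R) (f : {ffun T -> 'I_n}) : bool := @ib R _ E n f <= 1 + eps.

Lemma main_bound (eps : R) : 0 < eps -> (0 < #|E|)%N -> (0 < n)%N ->
  #|V|%:R <= eps * (#|E|%:R / n%:R) / 2 ->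
  1 - bisp_prob w s (Aeps eps)
    <= 4 * #|V|%:R * #|E|%:R / (eps * (#|E|%:R / n%:R) / 2) ^+ 2.
Proof.
move=> heps hE hn hV.
set K := #|E|%:R / n%:R.
set d := eps * K / 2.
have hn' : (0 : R) < n%:R by rewrite ltr0n.
have hK : 0 < K by rewrite divr_gt0 // ltr0n.
have hd : 0 < d by rewrite /d divr_gt0 // mulr_gt0.
have hmu : mu <= K by rewrite /mu /K ler_wpM2r ?N'_le // n_inv_ge0.
rewrite bisp_Ex.
have -> : 1 - Ex (fun _ f => (Aeps eps f)%:R)
   = Ex (fun _ f => 1 + (-1) * (Aeps eps f)%:R).
  by rewrite ExD ExZ Ex1 mulN1r.
apply: le_trans (_ : Ex (fun _ f => \sum_(p < n) (d ^+ 2)^-1 * (Y p f - mu) ^+ 2) <= _).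
  apply: Ex_le => l f.
  have hs : 0 <= \sum_(p < n) (d ^+ 2)^-1 * (Y p f - mu) ^+ 2.
    by apply: sumr_ge0 => p _; rewrite mulr_ge0 // ?sqr_ge0 // invr_ge0 sqr_ge0.
  case h: (Aeps eps f); first by rewrite mulr1 addrN.
  rewrite mulr0 addr0.
  have h1 : 1 + eps < @ib R _ E n f by rewrite ltNge; move: h; rewrite /Aeps => ->.
  have [p hp] := @bigop.eq_bigmax _ (fun l : 'I_n => #|[set e | f e == l]|) (ltac:(by rewrite card_ord)).
  move: h1; rewrite /ib hp -/K ltr_pdivlMr // card_sum => h1.
  have hY : \sum_e ((f e == p)%:R : R) <= Y p f + #|V|%:R.
    rewrite (bigID NL) /= lerD2l; apply: le_trans cnt_loops.
    by apply: ler_sum => e _; exact: ind_le1.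
  have hdY : d <= Y p f - mu.
    have : eps * K = 2 * d by rewrite /d; field.
    have : (1 + eps) * K = K + eps * K by ring.
    have hVd : #|V|%:R <= d := hV.
    lra.
  rewrite (bigD1 p) //= -[X in X <= _]addr0; apply: lerD.
    rewrite ler_pdivlMl ?exprn_gt0 // mulr1.
    by rewrite ler_pXn2r // ?nnegrE ltW // (lt_le_trans hd).
  by apply: sumr_ge0 => q _; rewrite mulr_ge0 // ?sqr_ge0 // invr_ge0 sqr_ge0.
rewrite Ex_sum.
apply: le_trans (_ : \sum_(p < n) (d ^+ 2)^-1 * (4 * #|V|%:R * #|E|%:R * n%:R^-1) <= _).
  by apply: ler_sum => p _; rewrite ExZ ler_wpM2l ?Var // invr_ge0 sqr_ge0.
rewrite sumr_const card_ord.
have hn0 : (n%:R : R) != 0 by rewrite gt_eqF.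
have hd0 : d != 0 by rewrite gt_eqF.
rewrite -[_ *+ n]mulr_natr le_eqVlt; apply/orP; left; apply/eqP.
by rewrite -mulrA mulfVK // mulrC.
Qed.

Lemma n_gt0 : (0 < n)%N.
Proof.
have hm : (0 < m)%N := ord_pos (oner_neq0 R) sum_w.
exact: (ord_pos (oner_neq0 R) (sum_s (Ordinal hm) (Ordinal hm))).
Qed.

Lemma bisp_le1 (A : pred {ffun T -> 'I_n}) : bisp_prob w s A <= 1.
Proof. by rewrite bisp_Ex -[X in _ <= X]Ex1; apply: Ex_le => l f; exact: ind_le1. Qed.

Lemma final_k (eps e g : R) : 0 < eps -> 0 < e ->
  1 <= (#|E|%:R / #|V|%:R : R) -> 0 <= g ->
  g ^+ 2 = n%:R ^+ 2 * #|V|%:R / #|E|%:R ->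
  `|0 - g| <= 1 -> `|0 - g| <= eps / 2 -> `|0 - g| <= e * eps ^+ 2 / 16 ->
  `|1 - @bisp_prob R V E n m w s (fun f => @ib R _ E n f <= 1 + eps)| <= e.
Proof.
move=> heps he h1 hg0 hg; rewrite sub0r normrN ger0_norm // => hg1 hg2 hg3.
set a : R := #|V|%:R in h1 hg *.
set b : R := #|E|%:R in h1 hg *.
set c : R := n%:R in hg *.
have ha : 0 < a.
  rewrite lt_neqAle ler0n andbT; apply/negP => /eqP a0.
  by move: h1; rewrite -a0 invr0 mulr0 ler10.
have hb : 0 < b.
  rewrite lt_neqAle ler0n andbT; apply/negP => /eqP b0.
  by move: h1; rewrite -b0 mul0r ler10.
have hEn : (0 < #|E|)%N by rewrite -(ltr0n R).
have hc : 1 <= c by rewrite /c ler1n n_gt0.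
have hr1 : g ^+ 2 <= g by rewrite expr2; nra.
have hVn : a <= eps * (b / c) / 2.
  have e1 : c ^+ 2 * a = g ^+ 2 * b by rewrite hg; field; rewrite gt_eqF.
  have e2 : c * a <= c ^+ 2 * a.
    by rewrite expr2 -mulrA ler_peMl // mulr_ge0 // ltW // (lt_le_trans ltr01).
  have key : 2 * c * a <= eps * b by nra.
  have -> : eps * (b / c) / 2 = (eps * b) / (2 * c) by field; rewrite gt_eqF // (lt_le_trans ltr01).
  rewrite ler_pdivlMr ?mulr_gt0 ?(lt_le_trans ltr01) //; lra.
have := main_bound heps hEn n_gt0 hVn.
rewrite /Aeps -/a -/b -/c.
have -> : 4 * a * b / (eps * (b / c) / 2) ^+ 2 = 16 * (g ^+ 2) / eps ^+ 2.
  rewrite hg; field; rewrite ?gt_eqF // (lt_le_trans ltr01) //.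
have hbl := bisp_le1 (fun f => @ib R _ E n f <= 1 + eps).
rewrite ger0_norm ?subr_ge0 // => hmb.
apply: le_trans hmb _.
rewrite ler_pdivrMr ?exprn_gt0 //.
have : g ^+ 2 <= e * eps ^+ 2 / 16 by apply: le_trans hr1 hg3.
lra.
Qed.

End Fixed.

Local Open Scope classical_set_scope.

Theorem lemma1 (R : realType)
  (V : nat -> finType) (E : forall k, {set V k * V k})
  (n m : nat -> nat)
  (F : forall k, 'I_(m k) -> {set 'I_(n k)})
  (w : forall k, 'I_(m k) -> R)
  (s : forall k, 'I_(m k) -> 'I_(m k) -> 'I_(n k) -> R)
  (hsys : forall k, is_system (F k) (w k) (s k))
  (hbal : forall k, balanced (w k) (s k))
  (hV : (fun k => (#|V k|%:R : R)) @ \oo --> +oo)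
  (hE : (fun k => (#|E k|%:R / #|V k|%:R : R)) @ \oo --> +oo)
  (hn : (fun k => ((n k)%:R / Num.sqrt (#|E k|%:R / #|V k|%:R) : R)) @ \oo --> (0 : R)) :
  forall eps : R, 0 < eps ->
    (fun k => (@bisp_prob R (V k) (E k) (n k) (m k) (w k) (s k) (fun f => @ib R _ (E k) (n k) f <= 1 + eps) : R)) @ \oo --> (1 : R).
Proof.
move=> eps heps.
apply/cvgrPdist_le => e he.
have A1 : \forall k \near \oo, 1 <= (#|E k|%:R / #|V k|%:R : R) by move/cvgryPge: hE; apply.
move/cvgrPdist_le: hn => hn'.
have A2 := hn' 1 ltr01.
have A3 := hn' (eps / 2) ltac:(by rewrite divr_gt0).
have A4 := hn' (e * eps ^+ 2 / 16) ltac:(by rewrite divr_gt0 // mulr_gt0 // exprn_gt0).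
near=> k.
apply: (final_k (g := (n k)%:R / Num.sqrt (#|E k|%:R / #|V k|%:R)) (hsys k) (hbal k) heps he);
  [near: k; exact: A1 | | | near: k; exact: A2 | near: k; exact: A3 | near: k; exact: A4].
  by rewrite divr_ge0 // sqrtr_ge0.
rewrite expr_div_n sqr_sqrtr ?divr_ge0 //.
by rewrite invf_div mulrA.
Unshelve. all: end_near.
Qed.
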